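(* Let $n\ge2$. Every point of the polygon $S(n)$ is an eigenvalue of some standardized Laplacian matrix of order $n$.
   Context: A standardized Laplacian matrix of order $n$ is a real $n\times n$ matrix whose row sums are all $0$ and whose off-diagonal entries are nonpositive with absolute value at most $1/n$. For $k=0,1,\dots,n-1$ put $\lambda_k(n)=\frac1n\big(k-\sum_{j=1}^k e^{-2\pi\mathrm i j/n}\big)=\frac1n\Big(k-\frac{\sin(k\pi/n)}{\sin(\pi/n)}e^{-(k+1)\pi\mathrm i/n}\Big)$ (so $\lambda_0(n)=0$, $\lambda_{n-1}(n)=1$). $S(n)$ is the closed convex polygon with vertices $\lambda_0(n)=0,\lambda_1(n),\dots,\lambda_{n-2}(n),\lambda_{n-1}(n)=1,\overline{\lambda_{n-2}(n)},\dots,\overline{\lambda_1(n)}$. *)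

(* Defs.v *)
From Stdlib Require Import Reals.
Open Scope R_scope.

Fixpoint sumR (n : nat) (f : nat -> R) : R :=
  match n with
  | O => 0
  | S m => sumR m f + f m
  end.

(* A real n x n matrix is a function A : nat -> nat -> R, only entries with
   indices < n are relevant. *)

Definition std_laplacian (n : nat) (A : nat -> nat -> R) : Prop :=
  (forall i, (i < n)%nat -> sumR n (fun j => A i j) = 0) /\
  (forall i j, (i < n)%nat -> (j < n)%nat -> i <> j ->
      A i j <= 0 /\ Rabs (A i j) <= / INR n).

(* The complex number z = (a, b) (i.e. a + i b) is an eigenvalue of the real
   n x n matrix A: there is a nonzero complex vector v = x + i y with A v = z v. *)
Definition is_eigenvalue (n : nat) (A : nat -> nat -> R) (z : R * R) : Prop :=
  exists x y : nat -> R,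
    (exists i, (i < n)%nat /\ (x i <> 0 \/ y i <> 0)) /\
    forall i, (i < n)%nat ->
      sumR n (fun j => A i j * x j) = fst z * x i - snd z * y i /\
      sumR n (fun j => A i j * y j) = fst z * y i + snd z * x i.

(* lambda_k(n) = (1/n) (k - sum_{j=1}^k e^{-2 pi i j / n}),
   using e^{-i t} = cos t - i sin t. *)
Definition lambda (n k : nat) : R * R :=
  ( / INR n * (INR k - sumR k (fun j => cos (2 * PI * INR (S j) / INR n))),
    / INR n * sumR k (fun j => sin (2 * PI * INR (S j) / INR n)) ).

Definition conjC (z : R * R) : R * R := (fst z, - snd z).

(* S(n): the closed convex polygon with vertices lambda_0(n), ..., lambda_{n-1}(n)
   and their conjugates, i.e. the convex hull of these finitely many points. *)
Definition in_S (n : nat) (z : R * R) : Prop :=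
  exists c d : nat -> R,
    (forall k, (k < n)%nat -> 0 <= c k /\ 0 <= d k) /\
    sumR n (fun k => c k + d k) = 1 /\
    fst z = sumR n (fun k => c k * fst (lambda n k) + d k * fst (conjC (lambda n k))) /\
    snd z = sumR n (fun k => c k * snd (lambda n k) + d k * snd (conjC (lambda n k))).

(* Main.v *)
Require Import Defs.
From Stdlib Require Import Reals Lra Lia.
Open Scope R_scope.

Lemma sumR_ext n f g : (forall i, (i<n)%nat -> f i = g i) -> sumR n f = sumR n g.
Proof. induction n; simpl; intros H; [reflexivity|].
  rewrite IHn by (intros; apply H; lia). rewrite H by lia. reflexivity. Qed.
Lemma sumR_plus n f g : sumR n (fun i => f i + g i) = sumR n f + sumR n g.
Proof. induction n; simpl; [ring|rewrite IHn; ring]. Qed.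
Lemma sumR_minus n f g : sumR n (fun i => f i - g i) = sumR n f - sumR n g.
Proof. induction n; simpl; [ring|rewrite IHn; ring]. Qed.
Lemma sumR_scal n c f : sumR n (fun i => c * f i) = c * sumR n f.
Proof. induction n; simpl; [ring|rewrite IHn; ring]. Qed.
Lemma sumR_mult_r n c f : sumR n (fun i => f i * c) = sumR n f * c.
Proof. induction n; simpl; [ring|rewrite IHn; ring]. Qed.
Lemma sumR_zero n : sumR n (fun _ => 0) = 0.
Proof. induction n; simpl; [ring|rewrite IHn; ring]. Qed.
Lemma sumR_const k c : sumR k (fun _ => c) = INR k * c.
Proof. induction k; [cbn [sumR INR]; ring|]. cbn [sumR]. rewrite IHk, S_INR; ring. Qed.
Lemma sumR_swap N M F : sumR N (fun a => sumR M (fun b => F a b)) = sumR M (fun b => sumR N (fun a => F a b)).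
Proof. induction N; simpl. now rewrite sumR_zero. rewrite IHN, sumR_plus. reflexivity. Qed.
Lemma sumR_le n f g : (forall i, (i<n)%nat -> f i <= g i) -> sumR n f <= sumR n g.
Proof. induction n; simpl; intros H; [lra|].
  assert (sumR n f <= sumR n g) by (apply IHn; intros; apply H; lia).
  assert (f n <= g n) by (apply H; lia). lra. Qed.
Lemma sumR_lin k a b f g : sumR k (fun j => a * f j + b * g j) = a * sumR k f + b * sumR k g.
Proof. rewrite sumR_plus, !sumR_scal. reflexivity. Qed.

Definition D (a b : nat) : R := if Nat.eq_dec a b then 1 else 0.
Definition sh (n i s : nat) : nat := if Nat.ltb (i+s) n then (i+s)%nat else (i+s-n)%nat.
Definition P n k i l := sumR k (fun j => D l (sh n i (S j))).
Definition Q n k i l := sumR k (fun j => D l (sh n i (n - S j))).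
Definition Amat n (c d : nat -> R) i l := / INR n * sumR n (fun k =>
   c k * (INR k * D i l - P n k i l) + d k * (INR k * D i l - Q n k i l)).
Definition dist n i l := if Nat.leb i l then (l - i)%nat else (l + n - i)%nat.

Ltac crush := unfold D, sh, dist in *; repeat (match goal with
 | |- context [Nat.leb ?a ?b] => destruct (Nat.leb_spec a b)
 | |- context [Nat.ltb ?a ?b] => destruct (Nat.ltb_spec a b)
 | |- context [Nat.eq_dec ?a ?b] => destruct (Nat.eq_dec a b)
 | H : context [Nat.leb ?a ?b] |- _ => destruct (Nat.leb_spec a b)
 | H : context [Nat.ltb ?a ?b] |- _ => destruct (Nat.ltb_spec a b)
 end); simpl; try lra; try (exfalso; lia).

Lemma D_sym a b : D a b = D b a.
Proof. crush. Qed.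

Lemma sumR_delta N p g : (p<N)%nat -> sumR N (fun l => D l p * g l) = g p.
Proof. induction N; intros Hp; [lia|]. simpl. destruct (Nat.eq_dec p N).
  - subst. rewrite (sumR_ext N _ (fun _ => 0)). rewrite sumR_zero. unfold D.
    destruct (Nat.eq_dec N N); [ring|congruence].
    intros i Hi. unfold D. destruct (Nat.eq_dec i N); [lia|ring].
  - rewrite IHN by lia. unfold D. destruct (Nat.eq_dec N p); [lia|ring]. Qed.

Lemma sh_lt n i s : (i < n)%nat -> (s <= n)%nat -> (sh n i s < n)%nat.
Proof. intros. unfold sh. destruct (Nat.ltb_spec (i+s) n); lia. Qed.

Lemma P_char n k i l : (i<n)%nat -> (l<n)%nat -> (k<n)%nat ->
  P n k i l = if andb (Nat.leb 1 (dist n i l)) (Nat.leb (dist n i l) k) then 1 else 0.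
Proof. intros Hi Hl. induction k; intros Hk.
  - unfold P; cbn [sumR]. crush.
  - unfold P in *; cbn [sumR]. rewrite IHk by lia. crush. Qed.

Lemma P_bnd n k i l : (i<n)%nat -> (l<n)%nat -> (k<n)%nat -> 0 <= P n k i l <= 1.
Proof. intros. rewrite P_char by auto.
  destruct (andb (Nat.leb 1 (dist n i l)) (Nat.leb (dist n i l) k)); lra. Qed.

Lemma Q_P n k i l : (i<n)%nat -> (l<n)%nat -> (k<n)%nat -> Q n k i l = P n k l i.
Proof. intros. unfold Q, P. apply sumR_ext. intros j Hj. crush. Qed.

Lemma Pv n k i v : (i<n)%nat -> (k<n)%nat ->
  sumR n (fun l => P n k i l * v l) = sumR k (fun j => v (sh n i (S j))).
Proof. intros. unfold P.
  transitivity (sumR n (fun l => sumR k (fun j => D l (sh n i (S j)) * v l))).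
  apply sumR_ext; intros; now rewrite sumR_mult_r.
  rewrite sumR_swap. apply sumR_ext; intros. apply sumR_delta. apply sh_lt; lia. Qed.

Lemma Qv n k i v : (i<n)%nat -> (k<n)%nat ->
  sumR n (fun l => Q n k i l * v l) = sumR k (fun j => v (sh n i (n - S j))).
Proof. intros. unfold Q.
  transitivity (sumR n (fun l => sumR k (fun j => D l (sh n i (n - S j)) * v l))).
  apply sumR_ext; intros; now rewrite sumR_mult_r.
  rewrite sumR_swap. apply sumR_ext; intros. apply sumR_delta. apply sh_lt; lia. Qed.

Lemma Amat_mv n c d v i : (i<n)%nat ->
  sumR n (fun l => Amat n c d i l * v l) = /INR n * sumR n (fun k =>
   c k * (INR k * v i - sumR k (fun j => v (sh n i (S j)))) +
   d k * (INR k * v i - sumR k (fun j => v (sh n i (n - S j))))).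
Proof. intros Hi. unfold Amat.
  transitivity (/INR n * sumR n (fun l => sumR n (fun k =>
    (c k * (INR k * D i l - P n k i l) + d k * (INR k * D i l - Q n k i l)) * v l))).
  rewrite <- sumR_scal. apply sumR_ext; intros. rewrite sumR_mult_r; ring.
  f_equal. rewrite sumR_swap. apply sumR_ext; intros k Hk.
  rewrite (sumR_ext _ _ (fun l => (c k * INR k + d k * INR k) * (D l i * v l)
      - (c k * (P n k i l * v l) + d k * (Q n k i l * v l)))).
  rewrite sumR_minus, sumR_plus, !sumR_scal, sumR_delta, Pv, Qv by auto. ring.
  intros; rewrite (D_sym i); ring. Qed.

Definition th n m := 2 * PI * INR m / INR n.
Definition xv n l := cos (th n l).
Definition yv n l := - sin (th n l).

Lemma th_sh n i s : (i<n)%nat -> (s<=n)%nat ->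
  cos (th n (sh n i s)) = cos (th n i + th n s) /\ sin (th n (sh n i s)) = sin (th n i + th n s).
Proof. intros. assert (INR n <> 0) by (apply not_0_INR; lia).
  unfold sh. destruct (Nat.ltb_spec (i+s) n).
  - unfold th. rewrite plus_INR. replace (2 * PI * (INR i + INR s) / INR n) with
      (2 * PI * INR i / INR n + 2 * PI * INR s / INR n) by (field; auto). auto.
  - unfold th. rewrite minus_INR by lia. rewrite plus_INR.
    replace (2 * PI * INR i / INR n + 2 * PI * INR s / INR n) with
     (2 * PI * (INR i + INR s - INR n) / INR n + 2 * INR 1 * PI) by (simpl; field; auto).
    rewrite cos_period, sin_period. auto. Qed.

Lemma th_nm n s : (s <= n)%nat -> (0 < n)%nat -> th n (n - s) = 2 * INR 1 * PI - th n s.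
Proof. intros. assert (INR n <> 0) by (apply not_0_INR; lia).
  unfold th. rewrite minus_INR by lia. simpl. field; auto. Qed.

Lemma cosp a b : cos (a + (2 * INR 1 * PI - b)) = cos (a - b).
Proof. replace (a + (2 * INR 1 * PI - b)) with ((a - b) + 2 * INR 1 * PI) by ring.
  apply cos_period. Qed.
Lemma sinp a b : sin (a + (2 * INR 1 * PI - b)) = sin (a - b).
Proof. replace (a + (2 * INR 1 * PI - b)) with ((a - b) + 2 * INR 1 * PI) by ring.
  apply sin_period. Qed.

Definition Cs n k := sumR k (fun j => cos (2 * PI * INR (S j) / INR n)).
Definition Ss n k := sumR k (fun j => sin (2 * PI * INR (S j) / INR n)).

Lemma L1 n i k : (i<n)%nat -> (k<n)%nat ->
  sumR k (fun j => xv n (sh n i (S j))) = xv n i * Cs n k + yv n i * Ss n k.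
Proof. intros. unfold Cs, Ss. rewrite <- sumR_lin. apply sumR_ext; intros j Hj.
  unfold xv, yv. rewrite (proj1 (th_sh n i (S j) ltac:(lia) ltac:(lia))), cos_plus.
  unfold th. ring. Qed.
Lemma L2 n i k : (i<n)%nat -> (k<n)%nat ->
  sumR k (fun j => xv n (sh n i (n - S j))) = xv n i * Cs n k + (- yv n i) * Ss n k.
Proof. intros. unfold Cs, Ss. rewrite <- sumR_lin. apply sumR_ext; intros j Hj.
  unfold xv, yv. rewrite (proj1 (th_sh n i (n - S j) ltac:(lia) ltac:(lia))).
  rewrite th_nm by lia. rewrite cosp, cos_minus. unfold th. ring. Qed.
Lemma L3 n i k : (i<n)%nat -> (k<n)%nat ->
  sumR k (fun j => yv n (sh n i (S j))) = yv n i * Cs n k + (- xv n i) * Ss n k.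
Proof. intros. unfold Cs, Ss. rewrite <- sumR_lin. apply sumR_ext; intros j Hj.
  unfold xv, yv. rewrite (proj2 (th_sh n i (S j) ltac:(lia) ltac:(lia))), sin_plus.
  unfold th. ring. Qed.
Lemma L4 n i k : (i<n)%nat -> (k<n)%nat ->
  sumR k (fun j => yv n (sh n i (n - S j))) = yv n i * Cs n k + xv n i * Ss n k.
Proof. intros. unfold Cs, Ss. rewrite <- sumR_lin. apply sumR_ext; intros j Hj.
  unfold xv, yv. rewrite (proj2 (th_sh n i (n - S j) ltac:(lia) ltac:(lia))).
  rewrite th_nm by lia. rewrite sinp, sin_minus. unfold th. ring. Qed.

Theorem theorem9 (n : nat) (hn : (2 <= n)%nat) (z : R * R) :
  in_S n z -> exists A : nat -> nat -> R, std_laplacian n A /\ is_eigenvalue n A z.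
Proof.
  intros [c [d [Hcd [Hsum [Hre Him]]]]].
  assert (Hn : 0 < INR n) by (apply lt_0_INR; lia).
  exists (Amat n c d). split; [split|].
  - intros i Hi.
    rewrite (sumR_ext n _ (fun l => Amat n c d i l * 1)) by (intros; ring).
    rewrite Amat_mv by auto.
    rewrite (sumR_ext n _ (fun _ => 0)). rewrite sumR_zero; ring.
    intros k Hk. rewrite sumR_const. ring.
  - intros i l Hi Hl Hne.
    assert (HA : Amat n c d i l = - (/INR n * sumR n (fun k => c k * P n k i l + d k * Q n k i l))).
    { unfold Amat. rewrite (sumR_ext n _ (fun k => (-1) * (c k * P n k i l + d k * Q n k i l))).
      rewrite sumR_scal. ring.
      intros k Hk. unfold D. destruct (Nat.eq_dec i l); [lia|ring]. }
    set (W := sumR n (fun k => c k * P n k i l + d k * Q n k i l)) in HA.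
    assert (H0 : 0 <= W).
    { rewrite <- (sumR_zero n). apply sumR_le. intros k Hk.
      destruct (Hcd k Hk). destruct (P_bnd n k i l Hi Hl Hk).
      rewrite Q_P by auto. destruct (P_bnd n k l i Hl Hi Hk). nra. }
    assert (H1 : W <= 1).
    { rewrite <- Hsum. apply sumR_le. intros k Hk.
      destruct (Hcd k Hk). destruct (P_bnd n k i l Hi Hl Hk).
      rewrite Q_P by auto. destruct (P_bnd n k l i Hl Hi Hk). nra. }
    assert (0 < / INR n) by (apply Rinv_0_lt_compat; auto).
    rewrite HA. split. nra.
    rewrite Rabs_Ropp, Rabs_right by nra. nra.
  - exists (xv n), (yv n). split.
    + exists 0%nat. split; [lia|]. left. unfold xv, th. simpl.
      replace (2 * PI * 0 / INR n) with 0 by (unfold Rdiv; ring). rewrite cos_0. lra.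
    + intros i Hi. rewrite !Amat_mv by auto. rewrite Hre, Him.
      split.
      * rewrite <- sumR_scal, <- !sumR_mult_r, <- sumR_minus. apply sumR_ext; intros k Hk.
        rewrite L1, L2 by lia. unfold lambda, conjC, Cs, Ss. cbn [fst snd]. ring.
      * rewrite <- sumR_scal, <- !sumR_mult_r, <- sumR_plus. apply sumR_ext; intros k Hk.
        rewrite L3, L4 by lia. unfold lambda, conjC, Cs, Ss. cbn [fst snd]. ring.
Qed.
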